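(* For every integer $m\geq 1$, the graph $\mathcal{G}^2_{4m+1}$ is transmission irregular.
   Context: Let $G_2$ be the graph with vertices $a,b,c,d,e,f,g,h$ and edges $ab, ae, af, bc, bf, bg, cd, cg, dh, ef, fg, gh$. For an integer $n\ge 3$, $\mathcal{G}^2_n$ is obtained from $G_2$ by adding a new path from $e$ to $h$ with $n$ new internal vertices (a path $e,x_1,\dots,x_n,h$ of length $n+1$). The transmission of a vertex $u$ in a connected graph $G$ is $Tr_G(u)=\sum_{v}d_G(u,v)$; a graph is transmission irregular if no two of its vertices have equal transmission. *)

(* Defs.v *)
From mathcomp Require Import all_boot.
Set Implicit Arguments. Unset Strict Implicit. Unset Printing Implicit Defensive.

Section Graphs.
Variable T : finType.
Variable e : rel T.

Definition walk_of_len (k : nat) (u v : T) : bool :=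
  [exists p : k.-tuple T, path e u p && (last u p == v)].

(* graph distance: least k with a walk of length k from u to v
   (in a connected graph this is < #|T|, so the bounded search is exact) *)
Definition dist (u v : T) : nat :=
  find (fun k => walk_of_len k u v) (iota 0 #|T|).

Definition connected_graph : Prop := forall u v : T, connect e u v.

Definition transmission (u : T) : nat := \sum_(v : T) dist u v.

Definition transmission_irregular : Prop := injective transmission.
End Graphs.

(* The graph G^2_n.  Vertices are 'I_(n+8):
   a=0, b=1, c=2, d=3, e=4, f=5, g=6, h=7, and x_i = 7+i for 1 <= i <= n. *)
Definition G2_edges : seq (nat * nat) :=
  [:: (0,1); (0,4); (0,5); (1,2); (1,5); (1,6); (2,3); (2,6);
      (3,7); (4,5); (5,6); (6,7)].

(* the path e, x_1, ..., x_n, h *)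
Definition path_edges (n : nat) : seq (nat * nat) :=
  (4, 8) :: [seq (7 + i, 8 + i) | i <- iota 1 n.-1] ++ [:: (7 + n, 7)].

Definition G2n_edges (n : nat) : seq (nat * nat) := G2_edges ++ path_edges n.

Definition G2n_adj (n : nat) : rel 'I_(n + 8) :=
  fun i j => ((nat_of_ord i, nat_of_ord j) \in G2n_edges n)
          || ((nat_of_ord j, nat_of_ord i) \in G2n_edges n).
Arguments G2n_adj n : clear implicits.

(* Main.v *)
Require Import Defs.
From mathcomp Require Import all_boot.
From mathcomp Require Import zify.

Definition T8tab : seq (seq nat) :=
 [:: [:: 0; 1; 2; 3; 1; 1; 2; 3]; [:: 1; 0; 1; 2; 2; 1; 1; 2]; [:: 2; 1; 0; 1; 3; 2; 1; 2];
     [:: 3; 2; 1; 0; 4; 3; 2; 1]; [:: 1; 2; 3; 4; 0; 1; 2; 3]; [:: 1; 1; 2; 3; 1; 0; 1; 2];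
     [:: 2; 1; 1; 2; 2; 1; 0; 1]; [:: 3; 2; 2; 1; 3; 2; 1; 0]].
Definition T8 (u v : nat) : nat := nth 0 (nth [::] T8tab u) v.
Definition P (n u v : nat) : nat := minn (T8 u 4 + (v - 7)) (T8 u 7 + (n + 8 - v)).
Definition C (n u v : nat) : nat := minn ((u - v) + (v - u)) (n + 4 - ((u - v) + (v - u))).
Definition D (n u v : nat) : nat :=
  if u < 8 then (if v < 8 then T8 u v else P n u v)
  else if v < 8 then P n v u else C n u v.

Definition PathE (n x y : nat) : bool :=
  [|| (x == 4) && (y == 8), (8 <= x) && (x <= n + 6) && (y == x + 1) | (x == n + 7) && (y == 7)].
Definition EdgeB (n x y : nat) : bool := ((x, y) \in G2_edges) || PathE n x y.

Lemma mem_pe (n x y : nat) : ((x, y) \in [seq (7 + i, 8 + i) | i <- iota 1 n.-1]) =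
  (7 < x <= n + 6) && (y == x + 1).
Proof.
apply/idP/idP.
- case/mapP=> i; rewrite mem_iota => /andP [H1 H2] [-> ->]; apply/andP; split; try lia.
- case/andP => /andP [H1 H2] /eqP ->; apply/mapP; exists (x - 7); first by rewrite mem_iota; lia.
  congr pair; lia.
Qed.

Lemma EdgeB_mem (n x y : nat) : 1 <= n -> ((x, y) \in G2n_edges n) = EdgeB n x y.
Proof.
move=> Hn; rewrite /G2n_edges /EdgeB (mem_cat (x, y)) /path_edges (in_cons (4, 8)) (mem_cat (x, y)) (mem_seq1 (x, y)).
by rewrite /PathE mem_pe !xpair_eqE [7 + n]addnC.
Qed.

Ltac solveD := rewrite /D /P /C /T8 /=; repeat case: ifP => ?; lia.

Lemma edge_lip n u x y : 5 <= n -> u < n + 8 -> EdgeB n x y ->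
  D n u y <= D n u x + 1 /\ D n u x <= D n u y + 1.
Proof.
move=> Hn Hu; rewrite /EdgeB /PathE.
case/orP => [H|/or3P [H|H|H]].
- rewrite !inE !xpair_eqE in H.
  repeat (case/orP: H => H; [case/andP: H => /eqP -> /eqP ->|]);
  try (case/andP: H => /eqP -> /eqP ->);
  (case: (ltnP u 8) => Hu8; [do 8 (case: u Hu Hu8 => [|u] Hu Hu8; [solveD|]); lia | solveD]).
- case/andP: H => /eqP -> /eqP ->.
  case: (ltnP u 8) => Hu8; [do 8 (case: u Hu Hu8 => [|u] Hu Hu8; [solveD|]); lia | solveD].
- case/andP: H => /andP [H1 H2] /eqP ->.
  case: (ltnP u 8) => Hu8; [do 8 (case: u Hu Hu8 => [|u] Hu Hu8; [solveD|]); lia | solveD].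
- case/andP: H => /eqP -> /eqP ->.
  case: (ltnP u 8) => Hu8; [do 8 (case: u Hu Hu8 => [|u] Hu Hu8; [solveD|]); lia | solveD].
Qed.

Ltac edge_tac := rewrite /EdgeB; first [ (apply/orP; left; apply/orP; left; done)
   | (apply/orP; right; apply/orP; left; done) | (apply/orP; left; apply/orP; right; rewrite /PathE; lia)
   | (apply/orP; right; apply/orP; right; rewrite /PathE; lia) ].
Ltac D_tac := rewrite /D /P /C; repeat case: ifP => ?; first [lia | cbn [T8 T8tab nth] in *; lia | rewrite /T8 /=; lia | rewrite /T8 /= in *; lia].
Ltac tryw w := exists w; split; [lia | split; [edge_tac | D_tac]].
Ltac trypar n v := first [ tryw (v - 1) | tryw (v + 1) | tryw 4 | tryw 7 ].
Ltac trypf n := first [ tryw 4 | tryw 7 | tryw 8 | tryw (n + 7)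
  | tryw 0 | tryw 1 | tryw 2 | tryw 3 | tryw 5 | tryw 6 ].

Lemma parent_pp n u v : 5 <= n -> u < n + 8 -> v < n + 8 -> v != u -> 8 <= u -> 8 <= v ->
  exists w, w < n + 8 /\ (EdgeB n w v || EdgeB n v w) /\ D n u w + 1 = D n u v.
Proof.
move=> Hn Hu Hv Huv Hu8 Hv8.
(case: (ltngtP u v) => H1; case: (leqP (2 * (u - v + (v - u))) (n + 4)) => H2;
  case: (v =P 8) => H3; case: (v =P n + 7) => H4; trypar n v).
Qed.

Lemma parent_fp n u v : 5 <= n -> u < 8 -> v < n + 8 -> 8 <= v ->
  exists w, w < n + 8 /\ (EdgeB n w v || EdgeB n v w) /\ D n u w + 1 = D n u v.
Proof.
move=> Hn Hu Hv Hv8.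
(case: (leqP (T8 u 4 + (v - 7)) (T8 u 7 + (n + 8 - v))) => H2;
  case: (v =P 8) => H3; case: (v =P n + 7) => H4;
  do 8 (case: u Hu H2 => [|u] Hu H2; [rewrite /T8 /= in H2; trypar n v|]); lia).
Qed.

Lemma parent_pf n u v : 5 <= n -> u < n + 8 -> 8 <= u -> v < 8 ->
  exists w, w < n + 8 /\ (EdgeB n w v || EdgeB n v w) /\ D n u w + 1 = D n u v.
Proof.
move=> Hn Hu Hu8 Hv.
(case: (leqP (T8 v 4 + (u - 7)) (T8 v 7 + (n + 8 - u))) => H2;
  case: (u =P 8) => H3; case: (u =P n + 7) => H4;
  do 8 (case: v Hv H2 => [|v] Hv H2; [rewrite /T8 /= in H2; trypf n|]); lia).
Qed.


Lemma parent_ff n u v : 5 <= n -> u < 8 -> v < 8 -> v != u ->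
  exists w, w < n + 8 /\ (EdgeB n w v || EdgeB n v w) /\ D n u w + 1 = D n u v.
Proof.
move=> Hn Hu Hv Huv.
(do 8 (case: u Hu Huv => [|u] Hu Huv; [do 8 (case: v Hv Huv => [|v] Hv Huv; [trypf n|]); lia|]); lia).
Qed.

Set Implicit Arguments. Unset Strict Implicit.

Section Cert.
Variables (T : finType) (e : rel T) (u : T) (f : T -> nat).
Hypothesis f0 : f u = 0.
Hypothesis flip : forall x y, e x y -> f y <= (f x).+1.
Hypothesis fpar : forall v, v != u -> exists w, e w v /\ (f w).+1 = f v.
Hypothesis fbound : forall v, f v < #|T|.

Lemma path_lb x (s : seq T) : path e x s -> f (last x s) <= f x + size s.
Proof.
elim: s x => [|y s IH] x /=; first by rewrite addn0.
case/andP => Hxy Hp; have := IH y Hp; have := @flip _ _ Hxy; lia.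
Qed.

Lemma walk_lb k v : walk_of_len e k u v -> f v <= k.
Proof.
case/existsP => p /andP [Hp /eqP <-].
have := path_lb Hp; rewrite f0 size_tuple; lia.
Qed.

Lemma walk_seq k v : f v = k -> exists s : seq T, [/\ size s = k, path e u s & last u s = v].
Proof.
elim: k v => [|k IH] v Hv.
- case: (eqVneq v u) => [->|Hvu]; first by exists [::].
  by case: (fpar Hvu) => w [_ Hw]; rewrite Hv in Hw.
- case: (eqVneq v u) => [Hvu|Hvu]; first by rewrite Hvu f0 in Hv.
  case: (fpar Hvu) => w [Hwv Hw].
  have [s [Hs Hp Hl]] := IH w (ltac:(rewrite Hv in Hw; lia)).
  exists (rcons s v); split.
  + by rewrite size_rcons Hs.
  + by rewrite rcons_path Hp Hl Hwv.
  + by rewrite last_rcons.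
Qed.

Lemma walk_ex v : walk_of_len e (f v) u v.
Proof.
have [s [Hs Hp Hl]] := walk_seq (erefl (f v)).
apply/existsP; have Hs' : size s == f v by rewrite Hs.
exists (Tuple Hs'); rewrite /= Hp /= Hl; done.
Qed.

Lemma dist_cert v : dist e u v = f v.
Proof.
rewrite /dist; set P := fun k => walk_of_len e k u v.
set s := iota 0 #|T|.
have Hsz : f v < size s by rewrite size_iota fbound.
have Hhas : has P s.
  apply/hasP; exists (f v); first by rewrite mem_iota /= add0n fbound.
  exact: walk_ex.
have H1 : find P s <= f v.
  rewrite leqNgt; apply/negP => Hlt.
  have := before_find 0 Hlt; rewrite nth_iota ?fbound // add0n.
  by rewrite /P walk_ex.
have H2 : f v <= find P s.
  have Hf : find P s < #|T| by rewrite has_find size_iota in Hhas.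
  have := nth_find 0 Hhas; rewrite nth_iota //.
  by rewrite add0n => /walk_lb.
by apply/eqP; rewrite eqn_leq H1 H2.
Qed.
End Cert.

Lemma D_self n u : D n u u = 0.
Proof.
rewrite /D; case: ifP => Hu.
- do 8 (case: u Hu => [|u] Hu; [done|]); lia.
- rewrite Hu /C; lia.
Qed.

Lemma D_bound n u v : 5 <= n -> u < n + 8 -> v < n + 8 -> D n u v < n + 8.
Proof.
move=> Hn Hu Hv.
case: (ltnP u 8) => Hu8; case: (ltnP v 8) => Hv8.
- do 8 (case: u Hu Hu8 => [|u] Hu Hu8; [do 8 (case: v Hv Hv8 => [|v] Hv Hv8; [D_tac|]); lia|]); lia. 
- do 8 (case: u Hu Hu8 => [|u] Hu Hu8; [D_tac|]); lia.
- do 8 (case: v Hv Hv8 => [|v] Hv Hv8; [D_tac|]); lia.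
- D_tac.
Qed.

Lemma adjE n (x y : 'I_(n + 8)) : 1 <= n ->
  G2n_adj n x y = EdgeB n x y || EdgeB n y x.
Proof. by move=> Hn; rewrite /G2n_adj !EdgeB_mem. Qed.

Lemma dist_D n (u v : 'I_(n + 8)) : 5 <= n -> dist (G2n_adj n) u v = D n u v.
Proof.
move=> Hn.
apply: (@dist_cert _ _ u (fun v : 'I_(n + 8) => D n u v)).
- exact: D_self.
- move=> x y; rewrite adjE; last by lia.
  case/orP => H.
  + by case: (@edge_lip n u _ _ Hn (ltn_ord u) H); lia.
  + by case: (@edge_lip n u _ _ Hn (ltn_ord u) H); lia.
- move=> w Hw.
  have Hw' : (w : nat) != u by [].
  have [z [Hz [Hz1 Hz2]]] :
     exists z, z < n + 8 /\ (EdgeB n z w || EdgeB n w z) /\ D n u z + 1 = D n u w.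
    case: (ltnP u 8) => Hu8; case: (ltnP w 8) => Hw8.
    + exact: parent_ff.
    + exact: parent_fp.
    + exact: parent_pf.
    + exact: parent_pp.
  exists (Ordinal Hz); rewrite adjE /=; last by lia.
  split; [by [] | lia].
- by move=> w; rewrite card_ord; apply: D_bound.
Qed.

Lemma sum_up a k c : (\sum_(a <= v < a + k) (c + (v - a))) * 2 + k = k * (2 * c + k).
Proof.
elim: k => [|k IH]; first by rewrite !addn0 big_geq.
rewrite [a + k.+1]addnS big_nat_recr /=; last by lia.
move: IH; lia.
Qed.

Lemma sum_dn a k c : (\sum_(a <= v < a + k) (c + (a + k - v))) * 2 = k * (2 * c + k + 1).
Proof.
elim: k c => [|k IH] c; first by rewrite !addn0 big_geq.
rewrite addnS big_nat_recr /=; last by lia.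
rewrite (eq_big_nat _ _ (F2 := fun v => (c + 1) + (a + k - v))); last by move=> v Hv; lia.
move: (IH (c + 1)); lia.
Qed.

Lemma seg_up a k b c (F : nat -> nat) : b = a + k ->
  (forall v, a <= v < b -> F v = c + (v - a)) ->
  (\sum_(a <= v < b) F v) * 2 + k = k * (2 * c + k).
Proof.
move=> -> HF; rewrite (eq_big_nat _ _ HF); exact: sum_up.
Qed.

Lemma seg_dn a k b c (F : nat -> nat) : b = a + k ->
  (forall v, a <= v < b -> F v = c + (b - v)) ->
  (\sum_(a <= v < b) F v) * 2 = k * (2 * c + k + 1).
Proof.
move=> -> HF; rewrite (eq_big_nat _ _ HF); exact: sum_dn.
Qed.

Lemma sum8 (F : nat -> nat) : \sum_(0 <= v < 8) F v = F 0 + F 1 + F 2 + F 3 + F 4 + F 5 + F 6 + F 7.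
Proof. by rewrite /index_iota /= !big_cons big_nil !addnA addn0. Qed.

Lemma split8 n (F : nat -> nat) : \sum_(0 <= v < n + 8) F v = \sum_(0 <= v < 8) F v + \sum_(8 <= v < n + 8) F v.
Proof. by rewrite (big_cat_nat _ (n := 8)) //; lia. Qed.

Lemma path_fixed n a b k l (F : nat -> nat) : n = k + l ->
  (forall v, 8 <= v < 8 + k -> F v = (a + 1) + (v - 8)) ->
  (forall v, 8 + k <= v < n + 8 -> F v = b + (n + 8 - v)) ->
  (\sum_(8 <= v < n + 8) F v) * 2 = k * (2 * a + k + 1) + l * (2 * b + l + 1).
Proof.
move=> Hn H1 H2.
have -> : \sum_(8 <= v < n + 8) F v = \sum_(8 <= v < 8 + k) F v + \sum_(8 + k <= v < n + 8) F v.
  by apply: big_cat_nat; lia.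
have E1 := @seg_up 8 k (8 + k) (a + 1) F (erefl _) H1.
have E2 := @seg_dn (8 + k) l (n + 8) b F (ltac:(lia)) H2.
lia.
Qed.

Definition TrFv (q u : nat) : nat :=
  nth 0 [:: q*q+6*q+15; q*q+6*q+13; q*q+7*q+15; q*q+7*q+17;
            q*q+5*q+16; q*q+5*q+13; q*q+5*q+12; q*q+5*q+14] u.

Ltac trf n p u k l :=
    have := @path_fixed n (T8 u 4) (T8 u 7) k l (D n u) (ltac:(lia))
       (ltac:(move=> v Hv; D_tac)) (ltac:(move=> v Hv; D_tac));
    rewrite split8 sum8 /TrFv /=; rewrite /D /=; cbn [T8 T8tab nth]; lia.

Lemma TrF n p u : n = 2 * p + 3 -> u < 8 ->
  \sum_(0 <= v < n + 8) D n u v = TrFv (p + 1) u.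
Proof.
move=> Hn Hu.
case: u Hu => [|[|[|[|[|[|[|[|u]]]]]]]] Hu; last by lia.
- trf n p 0 (p + 3) p.
- trf n p 1 (p + 2) (p + 1).
- trf n p 2 (p + 1) (p + 2).
- trf n p 3 p (p + 3).
- trf n p 4 (p + 3) p.
- trf n p 5 (p + 2) (p + 1).
- trf n p 6 (p + 1) (p + 2).
- trf n p 7 p (p + 3).
Qed.

Lemma cat2 a b c (F : nat -> nat) : a <= b -> b <= c ->
  \sum_(a <= v < c) F v = \sum_(a <= v < b) F v + \sum_(b <= v < c) F v.
Proof. by move=> H1 H2; apply: big_cat_nat. Qed.

Lemma cat3 a b c d (F : nat -> nat) : a <= b -> b <= c -> c <= d ->
  \sum_(a <= v < d) F v = \sum_(a <= v < b) F v + \sum_(b <= v < c) F v + \sum_(c <= v < d) F v.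
Proof. by move=> H1 H2 H3; rewrite (@cat2 a c d) ?(@cat2 a b c) //; lia. Qed.

Lemma D_pf n j k : k < 8 -> j < n -> D n (8 + j) k = minn (T8 k 4 + (j + 1)) (T8 k 7 + (n - j)).
Proof.
move=> Hk Hj; rewrite /D /P; have -> : (8 + j < 8) = false by lia.
rewrite Hk; congr minn; lia.
Qed.

Definition TrXv (q j : nat) : nat :=
  if j + 2 <= q then q*q+5*q+20+4*j else if j + 1 == q then q*q+9*q+15
  else if j == q then q*q+9*q+16 else q*q+13*q+18-4*j.

Ltac fixpart := rewrite split8 sum8 !D_pf //; cbn [T8 T8tab nth].

Lemma TrX_A n q j t : n = 2 * q + 1 -> q = j + t + 3 ->
  \sum_(0 <= v < n + 8) D n (8 + j) v = TrXv q j.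
Proof.
move=> -> ->; set N := 2 * _ + 1.
have Hj : j < N by rewrite /N; lia.
fixpart.
rewrite (@cat3 8 (8 + j) (8 + j + (j + t + 3 + 3)) (N + 8)); [|lia|lia|rewrite /N; lia].
have E1 := @seg_dn 8 j (8 + j) 0 (D N (8 + j)) (erefl _) (ltac:(move=> v Hv; D_tac)).
have E2 := @seg_up (8 + j) (j + t + 6) (8 + j + (j + t + 3 + 3)) 0 (D N (8 + j)) (ltac:(lia)) (ltac:(move=> v Hv; D_tac)).
have E3 := @seg_dn (8 + j + (j + t + 3 + 3)) (t + 1) (N + 8) (j + 4) (D N (8 + j)) (ltac:(rewrite /N; lia)) (ltac:(move=> v Hv; D_tac)).
rewrite /TrXv ifT; last by lia.
rewrite /N in E1 E2 E3 Hj *; lia.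
Qed.

Lemma TrX_C n q j t s : n = 2 * q + 1 -> q = t + s + 3 -> j = 2 * t + s + 6 ->
  \sum_(0 <= v < n + 8) D n (8 + j) v = TrXv q j.
Proof.
move=> -> -> ->; set N := 2 * _ + 1.
have Hj : 2 * t + s + 6 < N by rewrite /N; lia.
fixpart.
rewrite (@cat3 8 (9 + t) (8 + (2 * t + s + 6)) (N + 8)); [|lia|lia|rewrite /N; lia].
have E1 := @seg_up 8 (t + 1) (9 + t) (s + 5) (D N (8 + (2 * t + s + 6))) (ltac:(lia)) (ltac:(move=> v Hv; D_tac)).
have E2 := @seg_dn (9 + t) (t + s + 5) (8 + (2 * t + s + 6)) 0 (D N (8 + (2 * t + s + 6))) (ltac:(lia)) (ltac:(move=> v Hv; D_tac)).
have E3 := @seg_up (8 + (2 * t + s + 6)) (s + 1) (N + 8) 0 (D N (8 + (2 * t + s + 6))) (ltac:(rewrite /N; lia)) (ltac:(move=> v Hv; D_tac)).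
rewrite /TrXv.
have -> : (2 * t + s + 6 + 2 <= t + s + 3) = false by lia.
have -> : (2 * t + s + 6 + 1 == t + s + 3) = false by lia.
have -> : (2 * t + s + 6 == t + s + 3) = false by lia.
rewrite /N in E1 E2 E3 Hj *; lia.
Qed.

Lemma pathB n q j k2 : n = 2 * q + 1 -> n = j + k2 -> j <= q + 2 -> k2 <= q + 3 ->
  (\sum_(8 <= v < n + 8) D n (8 + j) v) * 2 + k2 = j * (j + 1) + k2 * k2.
Proof.
move=> Hq Hn Hj Hk.
rewrite (@cat2 8 (8 + j) (n + 8)); [|lia|lia].
have E1 := @seg_dn 8 j (8 + j) 0 (D n (8 + j)) (erefl _) (ltac:(move=> v Hv; D_tac)).
have E2 := @seg_up (8 + j) k2 (n + 8) 0 (D n (8 + j)) (ltac:(lia)) (ltac:(move=> v Hv; D_tac)).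
lia.
Qed.

Lemma TrX n q j : n = 2 * q + 1 -> 2 <= q -> j < n ->
  \sum_(0 <= v < n + 8) D n (8 + j) v = TrXv q j.
Proof.
move=> Hn Hq Hj.
case: (leqP (j + 3) q) => H1.
  by apply: (@TrX_A n q j (q - j - 3)) => //; lia.
case: (leqP (q + 3) j) => H2.
  by apply: (@TrX_C n q j (j - q - 3) (2 * q - j)) => //; lia.
have : q = j + 2 \/ q = j + 1 \/ q = j \/ j = q + 1 \/ j = q + 2 by lia.
case=> [Hc|[Hc|[Hc|[Hc|Hc]]]]; fixpart; rewrite /TrXv.
- subst q n; have := @pathB (2 * (j + 2) + 1) (j + 2) j (j + 5) (erefl _) (ltac:(lia)) (ltac:(lia)) (ltac:(lia)).
  rewrite ifT; last by lia.
  lia.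
- subst q n; have := @pathB (2 * (j + 1) + 1) (j + 1) j (j + 3) (erefl _) (ltac:(lia)) (ltac:(lia)) (ltac:(lia)).
  rewrite ifF; last by lia. rewrite ifT; last by lia.
  lia.
- subst q n; have := @pathB (2 * j + 1) j j (j + 1) (erefl _) (ltac:(lia)) (ltac:(lia)) (ltac:(lia)).
  rewrite ifF; last by lia. rewrite ifF; last by lia. rewrite ifT; last by lia.
  lia.
- subst j n; have := @pathB (2 * q + 1) q (q + 1) q (erefl _) (ltac:(lia)) (ltac:(lia)) (ltac:(lia)).
  rewrite ifF; last by lia. rewrite ifF; last by lia. rewrite ifF; last by lia.
  lia.
- subst j n. case: q Hq Hj H1 H2 => [|p] Hq Hj H1 H2; first by lia.
  have := @pathB (2 * p.+1 + 1) p.+1 (p.+1 + 2) p (erefl _) (ltac:(lia)) (ltac:(lia)) (ltac:(lia)).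
  rewrite ifF; last by lia. rewrite ifF; last by lia. rewrite ifF; last by lia.
  lia.
Qed.

Lemma Tr_sum n (u : 'I_(n + 8)) : 5 <= n ->
  transmission (G2n_adj n) u = \sum_(0 <= v < n + 8) D n u v.
Proof.
move=> Hn; rewrite /transmission (eq_bigr (fun v : 'I_(n + 8) => D n u v)).
  by rewrite big_mkord.
by move=> v _; apply: dist_D.
Qed.

Definition TV (m x : nat) : nat := if x < 8 then TrFv (2 * m) x else TrXv (2 * m) (x - 8).

Lemma TrAll m (u : 'I_(4 * m + 1 + 8)) : 1 <= m ->
  transmission (G2n_adj (4 * m + 1)) u = TV m u.
Proof.
move=> Hm; rewrite Tr_sum; last by lia.
rewrite /TV; case: ifP => Hu.
- rewrite (@TrF _ (2 * m - 1)) //; last by lia.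
  by have -> : 2 * m - 1 + 1 = 2 * m by lia.
- have Hu' : (u : nat) = 8 + (u - 8) by lia.
  have E := @TrX (4 * m + 1) (2 * m) (u - 8) (ltac:(lia)) (ltac:(lia)) (ltac:(have := ltn_ord u; lia)).
  by rewrite -Hu' in E.
Qed.

Lemma TV_inj m x y : 1 <= m -> x < 4 * m + 9 -> y < 4 * m + 9 -> TV m x = TV m y -> x = y.
Proof.
move=> Hm Hx Hy; rewrite /TV.
case: (ltnP x 8) => Hx8; case: (ltnP y 8) => Hy8.
- case: x Hx Hx8 => [|[|[|[|[|[|[|[|x]]]]]]]] Hx Hx8; try lia;
  case: y Hy Hy8 => [|[|[|[|[|[|[|[|y]]]]]]]] Hy Hy8; rewrite /TrFv /=; lia.
- rewrite /TrXv; case: x Hx Hx8 => [|[|[|[|[|[|[|[|x]]]]]]]] Hx Hx8; try lia;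
  rewrite /TrFv /=; repeat case: ifP => ?; lia.
- rewrite /TrXv; case: y Hy Hy8 => [|[|[|[|[|[|[|[|y]]]]]]]] Hy Hy8; try lia;
  rewrite /TrFv /=; repeat case: ifP => ?; lia.
- rewrite /TrXv; repeat case: ifP => ?; lia.
Qed.

Theorem proposition2 (m : nat) :
  1 <= m -> transmission_irregular (G2n_adj (4 * m + 1)).
Proof.
move=> Hm u v; rewrite !TrAll // => H.
apply: val_inj; apply: (TV_inj Hm) => //.
- case: u H => x Hx H /=; lia.
- case: v H => x Hx H /=; lia.
Qed.
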